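(* Let $E,\tilde E$ be crossed module extensions of $\Pi_0$ with $\Pi_1$ and $\varphi:E\to\tilde E$ an extension equivalence. Let $(s^1,s^0)$ be a section system for $E$ and $(\tilde s^1,\tilde s^0)$ a section system for $\tilde E$ with $\tilde s^0=\varphi_0\circ s^0$ and $\varphi_1\circ s^1=\tilde s^1\circ\varphi_0|_{\mu(M_E)}$. Let $M$ be an abelian $\Pi_0$-module. Then the map $Z^2(\tilde E,M)\to Z^2(E,M)$, $\tilde z\mapsto\big((m,h,g)\mapsto\tilde z(\varphi_1(m),\varphi_0(h),\varphi_0(g))\big)$, restricts to an isomorphism $Z^2_{\mathrm{st},(\tilde s^1,\tilde s^0)}(\tilde E,M)\to Z^2_{\mathrm{st},(s^1,s^0)}(E,M)$, which induces isomorphisms $B^2_{\mathrm{st},(\tilde s^1,\tilde s^0)}(\tilde E,M)\to B^2_{\mathrm{st},(s^1,s^0)}(E,M)$ and $H^2_{\mathrm{st},(\tilde s^1,\tilde s^0)}(\tilde E,M)\to H^2_{\mathrm{st},(s^1,s^0)}(E,M)$.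
   Context: Let $\Pi_0$ be a group, $\Pi_1$ an abelian $\Pi_0$-module. A crossed module $(G,M_V,\mu)$: left action ${}^gm$, $\mu({}^gm)=g\mu(m)g^{-1}$, ${}^{\mu(n)}m=nmn^{-1}$. A crossed module extension $E$ of $\Pi_0$ with $\Pi_1$: crossed module $(G_E,M_E,\mu)$ with monomorphism $\iota:\Pi_1\to M_E$ and epimorphism $\pi:G_E\to\Pi_0$, exact sequence $\Pi_1\to M_E\to G_E\to\Pi_0$, ${}^g\iota(k)=\iota(\pi(g)k)$. An extension equivalence $\varphi:E\to\tilde E$ is a crossed module morphism, i.e. homomorphisms $\varphi_0:G_E\to G_{\tilde E}$, $\varphi_1:M_E\to M_{\tilde E}$ with $\mu\varphi_1=\varphi_0\mu$, $\varphi_1({}^gm)={}^{\varphi_0(g)}\varphi_1(m)$, such that $\varphi_1\iota=\tilde\iota$ and $\tilde\pi\varphi_0=\pi$. A section system for $E$: $s^0:\Pi_0\to G_E$ with $s^0(1)=1$, $\pi s^0=\mathrm{id}$, and $s^1:\mu(M_E)\to M_E$ with $s^1(1)=1$, $\mu s^1=\mathrm{id}$. Cochains of $E$ (with $\bar g=\pi(g)$, $M$ a $G_E$-module via $\pi$): $C^1=\mathrm{Map}(G_E,M)$, $C^2=\mathrm{Map}(M_E\times G_E\times G_E,M)$, $(dc)(m,h,g)=c(\mu(m)h)-c(hg)+\bar hc(g)$, $(dc)(p,n,k,m,h,g)=c(p,\mu(n)k,\mu(m)h)-c(pn,k,hg)+c(n\,{}^km,kh,g)-\bar kc(m,h,g)$.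 Pointed: $c(1)=0$ / $c(1,1,1)=0$. Standardisation w.r.t. $(s^1,s^0)$: for a pointed 2-cocycle $z$, $\sigma_z(g)=z(s^1(gs^0(\bar g)^{-1}),s^0(\bar g),1)$, $z^{\mathrm{std}}=z-d\sigma_z$. $Z^2_{\mathrm{st},(s^1,s^0)}$ = pointed cocycles with $z^{\mathrm{std}}=z$; $B^2_{\mathrm{st},(s^1,s^0)}=\{b\in B^2\cap C^2_{\mathrm{pt}}:b^{\mathrm{std}}=b\}$; $H^2_{\mathrm{st}}=Z^2_{\mathrm{st}}/B^2_{\mathrm{st}}$. *)

(* Defs.v *)
From HB Require Import structures.
From mathcomp Require Import all_boot all_algebra.
Set Implicit Arguments. Unset Strict Implicit. Unset Printing Implicit Defensive.
Import GRing.Theory.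
Local Open Scope ring_scope.

Record Grp := {
  gcar :> Type;
  gmul : gcar -> gcar -> gcar;
  ginv : gcar -> gcar;
  gone : gcar;
  gmulA : forall x y z, gmul x (gmul y z) = gmul (gmul x y) z;
  gmul1 : forall x, gmul x gone = x;
  g1mul : forall x, gmul gone x = x;
  gmulV : forall x, gmul x (ginv x) = gone;
  gVmul : forall x, gmul (ginv x) x = gone }.

Arguments gmul {g}. Arguments ginv {g}. Arguments gone {g}.

Definition is_ghom (A B : Grp) (f : A -> B) : Prop :=
  forall x y, f (gmul x y) = gmul (f x) (f y).

Record Module (P : Grp) := {
  mcar :> zmodType;
  mact : P -> mcar -> mcar;
  mact1 : forall a, mact gone a = a;
  mactM : forall x y a, mact (gmul x y) a = mact x (mact y a);
  mactD : forall x a b, mact x (a + b) = mact x a + mact x b }.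

Arguments mact {P m}.

Record CrossedModule := {
  cmG : Grp;
  cmM : Grp;
  cmact : cmG -> cmM -> cmM;
  cmmu : cmM -> cmG;
  cmact1 : forall m, cmact gone m = m;
  cmactM : forall g h m, cmact (gmul g h) m = cmact g (cmact h m);
  cmactD : forall g m n, cmact g (gmul m n) = gmul (cmact g m) (cmact g n);
  cmmu_hom : is_ghom cmmu;
  cmmu_act : forall g m, cmmu (cmact g m) = gmul (gmul g (cmmu m)) (ginv g);
  cmpeiffer : forall n m, cmact (cmmu n) m = gmul (gmul n m) (ginv n) }.

Arguments cmmu : clear implicits. Arguments cmact : clear implicits.

Record CMExt (Pi0 : Grp) (Pi1 : Module Pi0) := {
  xcm : CrossedModule;
  xiota : Pi1 -> cmM xcm;
  xpi : cmG xcm -> Pi0;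
  xiota_hom : forall a b, xiota (a + b) = gmul (xiota a) (xiota b);
  xiota_inj : forall a b, xiota a = xiota b -> a = b;
  xpi_hom : is_ghom xpi;
  xpi_surj : forall x, exists g, xpi g = x;
  xexact1 : forall m, cmmu xcm m = gone <-> exists k, xiota k = m;
  xexact2 : forall g, xpi g = gone <-> exists m, cmmu xcm m = g;
  xiota_act : forall g k, cmact xcm g (xiota k) = xiota (mact (xpi g) k) }.

Arguments xiota {Pi0 Pi1}. Arguments xpi {Pi0 Pi1}.

Notation GE E := (cmG (xcm E)).
Notation ME E := (cmM (xcm E)).
Notation muE E := (cmmu (xcm E)).
Notation actE E := (cmact (xcm E)).

Definition ext_equiv (Pi0 : Grp) (Pi1 : Module Pi0) (E Et : CMExt Pi1)
    (phi0 : GE E -> GE Et) (phi1 : ME E -> ME Et) : Prop :=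
  is_ghom phi0 /\ is_ghom phi1 /\
  (forall m, muE Et (phi1 m) = phi0 (muE E m)) /\
  (forall g m, phi1 (actE E g m) = actE Et (phi0 g) (phi1 m)) /\
  (forall k, phi1 (xiota E k) = xiota Et k) /\
  (forall g, xpi Et (phi0 g) = xpi E g).

(* Section system (s1, s0).  s1 is only specified on mu(M_E); it is
   represented as a total function G_E -> M_E whose values outside
   mu(M_E) are irrelevant (they are never used below). *)
Definition section_system (Pi0 : Grp) (Pi1 : Module Pi0) (E : CMExt Pi1)
    (s1 : GE E -> ME E) (s0 : Pi0 -> GE E) : Prop :=
  [/\ s0 gone = gone, forall x, xpi E (s0 x) = x,
      s1 gone = gone &
      forall g, (exists m, muE E m = g) -> muE E (s1 g) = g].

Section Cochains.
Variables (Pi0 : Grp) (Pi1 : Module Pi0) (E : CMExt Pi1) (M : Module Pi0).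

Definition C1 := GE E -> M.
Definition C2 := ME E -> GE E -> GE E -> M.

Definition d1 (c : C1) : C2 := fun m h g =>
  c (gmul (muE E m) h) - c (gmul h g) + mact (xpi E h) (c g).

Definition d2 (c : C2) (p n : ME E) (k : GE E) (m : ME E) (h g : GE E) : M :=
  c p (gmul (muE E n) k) (gmul (muE E m) h) - c (gmul p n) k (gmul h g)
  + c (gmul n (actE E k m)) (gmul k h) g - mact (xpi E k) (c m h g).

Definition cocycle2 (z : C2) : Prop := forall p n k m h g, d2 z p n k m h g = 0.
Definition coboundary2 (b : C2) : Prop :=
  exists c : C1, forall m h g, b m h g = d1 c m h g.
Definition pointed2 (z : C2) : Prop := z gone gone gone = 0.

Variables (s1 : GE E -> ME E) (s0 : Pi0 -> GE E).

Definition sigma_std (z : C2) : C1 := fun g =>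
  z (s1 (gmul g (ginv (s0 (xpi E g))))) (s0 (xpi E g)) gone.

Definition zstd (z : C2) : C2 := fun m h g => z m h g - d1 (sigma_std z) m h g.

Definition is_std (z : C2) : Prop := forall m h g, zstd z m h g = z m h g.

Definition Z2st (z : C2) : Prop := [/\ cocycle2 z, pointed2 z & is_std z].
Definition B2st (b : C2) : Prop := [/\ coboundary2 b, pointed2 b & is_std b].
End Cochains.

Definition pullback (Pi0 : Grp) (Pi1 : Module Pi0) (E Et : CMExt Pi1)
    (M : Module Pi0) (phi0 : GE E -> GE Et) (phi1 : ME E -> ME Et)
    (zt : C2 Et M) : C2 E M :=
  fun m h g => zt (phi1 m) (phi0 h) (phi0 g).

Definition sub2 (Pi0 : Grp) (Pi1 : Module Pi0) (E : CMExt Pi1) (M : Module Pi0)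
  (a b : C2 E M) : C2 E M := fun m h g => a m h g - b m h g.
Definition add2 (Pi0 : Grp) (Pi1 : Module Pi0) (E : CMExt Pi1) (M : Module Pi0)
  (a b : C2 E M) : C2 E M := fun m h g => a m h g + b m h g.

(* Main.v *)
Require Import Defs.
From Stdlib Require Import ClassicalEpsilon FunctionalExtensionality.
From HB Require Import structures.
From mathcomp Require Import all_boot all_algebra.
Set Implicit Arguments. Unset Strict Implicit. Unset Printing Implicit Defensive.
Import GRing.Theory.
Local Open Scope ring_scope.
Local Notation "x ⋆ y" := (gmul x y) (at level 40, left associativity).


Section GrpL.
Variable G : Grp.
Implicit Types x y z : G.
Lemma gmulKl x y : ginv x ⋆ (x ⋆ y) = y.
Proof. by rewrite gmulA gVmul g1mul. Qed.
Lemma gmulVKl x y : x ⋆ (ginv x ⋆ y) = y.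
Proof. by rewrite gmulA gmulV g1mul. Qed.
Lemma gmulKr x y : (y ⋆ x) ⋆ ginv x = y.
Proof. by rewrite -gmulA gmulV gmul1. Qed.
Lemma gmulVKr x y : (y ⋆ ginv x) ⋆ x = y.
Proof. by rewrite -gmulA gVmul gmul1. Qed.
Lemma gcancel_l x y z : x ⋆ y = x ⋆ z -> y = z.
Proof. by move=> H; rewrite -(gmulKl x y) H gmulKl. Qed.
Lemma gcancel_r x y z : y ⋆ x = z ⋆ x -> y = z.
Proof. by move=> H; rewrite -(gmulKr x y) H gmulKr. Qed.
Lemma ginv_uniq x y : x ⋆ y = gone -> y = ginv x.
Proof. by move=> H; apply: (@gcancel_l x); rewrite H gmulV. Qed.
Lemma ginv1 : ginv (@gone G) = gone.
Proof. by symmetry; apply: ginv_uniq; rewrite gmul1. Qed.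
Lemma ginvK x : ginv (ginv x) = x.
Proof. by symmetry; apply: ginv_uniq; rewrite gVmul. Qed.
Lemma ginvM x y : ginv (x ⋆ y) = ginv y ⋆ ginv x.
Proof. by symmetry; apply: ginv_uniq; rewrite gmulA gmulKr gmulV. Qed.
Lemma gid_uniq x y : x ⋆ y = y -> x = gone.
Proof. by move=> H; apply: (@gcancel_r y); rewrite H g1mul. Qed.
End GrpL.

Section HomL.
Variables (A B : Grp) (f : A -> B) (Hf : is_ghom f).
Lemma ghom1 : f gone = gone.
Proof. by apply: (@gid_uniq _ _ (f gone)); rewrite -Hf gmul1. Qed.
Lemma ghomV x : f (ginv x) = ginv (f x).
Proof. by apply: ginv_uniq; rewrite -Hf gmulV ghom1. Qed.
End HomL.

Section CML.
Variable X : CrossedModule.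
Lemma cmact_one g : cmact X g gone = gone.
Proof. by apply: (@gid_uniq _ _ (cmact X g gone)); rewrite -cmactD gmul1. Qed.
Lemma cmact_inv g m : cmact X g (ginv m) = ginv (cmact X g m).
Proof. by apply: ginv_uniq; rewrite -cmactD gmulV cmact_one. Qed.
Lemma cmmu1 : cmmu X gone = gone.
Proof. exact: ghom1 (@cmmu_hom X). Qed.
Lemma cmmuV m : cmmu X (ginv m) = ginv (cmmu X m).
Proof. by rewrite (ghomV (@cmmu_hom X)). Qed.
Lemma cmmuM m n : cmmu X (m ⋆ n) = cmmu X m ⋆ cmmu X n.
Proof. exact: cmmu_hom. Qed.
End CML.

Section ModL.
Variables (P : Grp) (M : Module P).
Lemma mact0 x : mact x (0 : M) = 0.
Proof. by apply: (addrI (mact x (0:M))); rewrite -mactD !addr0. Qed.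
Lemma mactN x (a : M) : mact x (- a) = - mact x a.
Proof. by apply/eqP; rewrite -subr_eq0 opprK -mactD addNr mact0. Qed.
Lemma mactB x (a b : M) : mact x (a - b) = mact x a - mact x b.
Proof. by rewrite mactD mactN. Qed.
Lemma mactV x (a : M) : mact (ginv x) (mact x a) = a.
Proof. by rewrite -mactM gVmul mact1. Qed.
Lemma mactVr x (a : M) : mact x (mact (ginv x) a) = a.
Proof. by rewrite -mactM gmulV mact1. Qed.
End ModL.

Section ExtL.
Variables (Pi0 : Grp) (Pi1 : Module Pi0) (X : CMExt Pi1).
Lemma xpi1 : xpi X gone = gone.
Proof. exact: ghom1 (@xpi_hom _ _ X). Qed.
Lemma xpiV g : xpi X (ginv g) = ginv (xpi X g).
Proof. by rewrite (ghomV (@xpi_hom _ _ X)). Qed.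
Lemma xpiM g h : xpi X (g ⋆ h) = xpi X g ⋆ xpi X h.
Proof. exact: (@xpi_hom _ _ X). Qed.
Lemma xpi_mu m : xpi X (muE X m) = gone.
Proof. by apply/(@xexact2 _ _ X); exists m. Qed.
Lemma xiota0 : xiota X 0 = gone.
Proof. by apply: (@gid_uniq _ _ (xiota X 0)); rewrite -(@xiota_hom _ _ X) addr0. Qed.
Lemma mu_iota k : muE X (xiota X k) = gone.
Proof. by apply/(@xexact1 _ _ X); exists k. Qed.
Lemma mact_mu (M : Module Pi0) m (a : M) : mact (xpi X (muE X m)) a = a.
Proof. by rewrite xpi_mu mact1. Qed.
Lemma act_mu n m : actE X (muE X n) m = n ⋆ m ⋆ ginv n.
Proof. exact: cmpeiffer. Qed.
Lemma iota_central k m : xiota X k ⋆ m = m ⋆ xiota X k.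
Proof.
have H := act_mu m (xiota X k).
rewrite xiota_act xpi_mu mact1 in H.
by rewrite {1}H gmulVKr.
Qed.
Lemma mu_act g m : muE X (actE X g m) = g ⋆ muE X m ⋆ ginv g.
Proof. exact: cmmu_act. Qed.
End ExtL.

Section SecL.
Variables (Pi0 : Grp) (Pi1 : Module Pi0) (X : CMExt Pi1)
  (s1 : GE X -> ME X) (s0 : Pi0 -> GE X) (Hs : section_system s1 s0).

Definition secA (g : GE X) : ME X := s1 (g ⋆ ginv (s0 (xpi X g))).

Lemma s0_1 : s0 gone = gone. Proof. by case: Hs. Qed.
Lemma pi_s0 x : xpi X (s0 x) = x. Proof. by case: Hs. Qed.
Lemma s1_1 : s1 gone = gone. Proof. by case: Hs. Qed.
Lemma mu_s1 m : muE X (s1 (muE X m)) = muE X m.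
Proof. by case: Hs => _ _ _ H; apply: H; exists m. Qed.
Lemma mu_s1' g : (exists m, muE X m = g) -> muE X (s1 g) = g.
Proof. by case: Hs => _ _ _ H; apply: H. Qed.

Lemma ker_pi g : xpi X g = gone -> muE X (s1 g) = g.
Proof. by move=> /(@xexact2 _ _ X) H; apply: mu_s1'. Qed.

Lemma sec_dec g : g = muE X (secA g) ⋆ s0 (xpi X g).
Proof.
rewrite /secA ker_pi ?gmulVKr //.
by rewrite xpiM xpiV pi_s0 gmulV.
Qed.

Lemma secA_s0 x : secA (s0 x) = gone.
Proof. by rewrite /secA pi_s0 gmulV s1_1. Qed.

Lemma secA_mu m : secA (muE X m) = s1 (muE X m).
Proof. by rewrite /secA xpi_mu s0_1 ginv1 gmul1. Qed.

Lemma secA_muA g : muE X (secA g) = g ⋆ ginv (s0 (xpi X g)).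
Proof. by rewrite /secA ker_pi // xpiM xpiV pi_s0 gmulV. Qed.

Lemma pi_secA g : xpi X (muE X (secA g)) = gone.
Proof. exact: xpi_mu. Qed.

Lemma m_decomp m : exists k, m = s1 (muE X m) ⋆ xiota X k.
Proof.
have : muE X (ginv (s1 (muE X m)) ⋆ m) = gone.
  by rewrite cmmuM cmmuV mu_s1 gVmul.
move=> /(@xexact1 _ _ X) [k Hk]; exists k.
by rewrite Hk gmulVKl.
Qed.
End SecL.

Inductive zex := ZAtom of nat | ZAdd of zex & zex | ZNeg of zex | ZZero.

Section ZSolve.
Variable V : zmodType.
Fixpoint zden (env : seq V) (e : zex) : V :=
  match e with
  | ZAtom n => nth 0 env n
  | ZAdd a b => zden env a + zden env b
  | ZNeg a => - zden env a
  | ZZero => 0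
  end.
Fixpoint zcnt (i : nat) (e : zex) : int :=
  match e with
  | ZAtom n => if n == i then 1 else 0
  | ZAdd a b => zcnt i a + zcnt i b
  | ZNeg a => - zcnt i a
  | ZZero => 0
  end.
Lemma zden_sum env e :
  zden env e = \sum_(i < size env) (nth 0 env i) *~ zcnt i e.
Proof.
elim: e => [n|a IHa b IHb|a IHa|] /=.
- case: (ltnP n (size env)) => Hn.
  + rewrite (bigD1 (Ordinal Hn)) //= eqxx mulr1z big1 ?addr0 //.
    move=> j /eqP Hj; case: eqP => // Hnj; exfalso; apply: Hj.
    by apply: val_inj; rewrite /= Hnj.
  + rewrite nth_default // big1 // => j _.
    case: eqP => [Hnj|]; last by rewrite mulr0z.
    by move: (ltn_ord j); rewrite -Hnj ltnNge Hn.
- by rewrite IHa IHb -big_split /=; apply: eq_bigr => i _; rewrite mulrzDr.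
- by rewrite IHa -sumrN; apply: eq_bigr => i _; rewrite mulrNz.
- by rewrite big1 // => i _; rewrite mulr0z.
Qed.
Lemma zsolve_lemma env e :
  all (fun i => zcnt i e == 0) (iota 0 (size env)) -> zden env e = 0.
Proof.
move=> /allP H; rewrite zden_sum big1 // => i _.
have := H i; rewrite mem_iota add0n ltn_ord => /(_ isT) /eqP ->.
by rewrite mulr0z.
Qed.
End ZSolve.

Ltac zlookup x env :=
  lazymatch env with
  | ?y :: ?e => match y with
                | x => constr:(0%N)
                | _ => let n := zlookup x e in constr:(S n)
                end
  end.
Ltac zmem x env :=
  lazymatch env with
  | nil => constr:(false)
  | ?y :: ?e => match y with
                | x => constr:(true)
                | _ => zmem x e
                end
  end.
Ltac zatoms t env :=
  lazymatch t with
  | GRing.add ?a ?b => let e1 := zatoms a env in zatoms b e1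
  | GRing.opp ?a => zatoms a env
  | GRing.zero => env
  | _ => let b := zmem t env in
         lazymatch b with true => env | false => constr:(t :: env) end
  end.
Ltac zreify t env :=
  lazymatch t with
  | GRing.add ?a ?b => let x := zreify a env in let y := zreify b env in constr:(ZAdd x y)
  | GRing.opp ?a => let x := zreify a env in constr:(ZNeg x)
  | GRing.zero => constr:(ZZero)
  | _ => let n := zlookup t env in constr:(ZAtom n)
  end.
Ltac zsolve0 :=
  lazymatch goal with
  | |- @eq ?V ?t 0 =>
    let env := zatoms t (@nil V) in
    let e := zreify t env in
    change (zden env e = 0); apply: zsolve_lemma; vm_compute; reflexivity
  end.
Ltac zsolve := apply/eqP; rewrite -subr_eq0; apply/eqP; zsolve0.



Lemma zuse (V : zmodType) (x e : V) : e = 0 -> x - e = 0 -> x = 0.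
Proof. by move=> -> ; rewrite subr0. Qed.
Lemma zuseN (V : zmodType) (x e : V) : e = 0 -> x + e = 0 -> x = 0.
Proof. by move=> -> ; rewrite addr0. Qed.
Lemma zeq (V : zmodType) (x y : V) : x - y = 0 -> x = y.
Proof. by move/eqP; rewrite subr_eq0 => /eqP. Qed.

Ltac zl0 := zsolve0.
Ltac zl1 H := first [ apply: (zuse H); zsolve0 | apply: (zuseN H); zsolve0 ].
Ltac zl2 H1 H2 := first [ apply: (zuse H1); zl1 H2 | apply: (zuseN H1); zl1 H2 ].
Ltac zl3 H1 H2 H3 := first [ apply: (zuse H1); zl2 H2 H3 | apply: (zuseN H1); zl2 H2 H3 ].
Ltac zl4 H1 H2 H3 H4 := first [ apply: (zuse H1); zl3 H2 H3 H4 | apply: (zuseN H1); zl3 H2 H3 H4 ].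
Ltac zl5 H1 H2 H3 H4 H5 := first [ apply: (zuse H1); zl4 H2 H3 H4 H5 | apply: (zuseN H1); zl4 H2 H3 H4 H5 ].
Ltac zeqtac := lazymatch goal with |- _ = 0 => idtac | |- _ = _ => apply: zeq end.
Ltac simp1 := do 3 rewrite ?cmmu1 ?g1mul ?gmul1 ?cmact_one ?cmact1 ?xpi1 ?mact1.

Ltac zl6 H1 H2 H3 H4 H5 H6 := first [ apply: (zuse H1); zl5 H2 H3 H4 H5 H6 | apply: (zuseN H1); zl5 H2 H3 H4 H5 H6 ].
Section CocL.
Variables (Pi0 : Grp) (Pi1 : Module Pi0) (X : CMExt Pi1) (M : Module Pi0)
  (z : C2 X M) (Hz : cocycle2 z) (Hp : pointed2 z).

Local Notation w h g := (z gone h g).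
Local Notation lam m := (z m gone gone).

Lemma coc_w1 g : w gone g = 0.
Proof.
have := Hz gone gone gone gone gone g; rewrite /d2; simp1.
by rewrite Hp sub0r addNr sub0r => /eqP; rewrite oppr_eq0 => /eqP.
Qed.

Lemma coc_w2 k : w k gone = 0.
Proof.
have := Hz gone gone k gone gone gone; rewrite /d2; simp1.
by rewrite Hp mact0 subr0 subrr add0r.
Qed.

Lemma coc_nf1 m k g : z m k g = z m k gone + w k g.
Proof.
have := Hz m gone k gone gone g; rewrite /d2; simp1.
rewrite coc_w1 mact0 subr0 => H; zeqtac; zl1 H.
Qed.

Lemma coc_nf2 n h : z n h gone = lam n - w (muE X n) h.
Proof.
have := Hz gone n gone gone h gone; rewrite /d2; simp1.
rewrite coc_w2 (coc_nf1 n gone h) coc_w1 => H; zeqtac; zl1 H.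
Qed.

Lemma coc_nf m h g : z m h g = lam m - w (muE X m) h + w h g.
Proof. by rewrite coc_nf1 coc_nf2. Qed.

Lemma coc_W k h g :
  w k h - w k (h ⋆ g) + w (k ⋆ h) g - mact (xpi X k) (w h g) = 0.
Proof.
have := Hz gone gone k gone h g; rewrite /d2; simp1.
by [].
Qed.

Lemma coc_F1 p n : lam (p ⋆ n) = lam p + lam n - w (muE X p) (muE X n).
Proof.
have := Hz p n gone gone gone gone; rewrite /d2; simp1.
rewrite Hp coc_nf2 => H; zeqtac; zl1 H.
Qed.

Lemma coc_A1 k m h :
  w k (muE X m ⋆ h) - w k h + lam (actE X k m) - w (muE X (actE X k m)) (k ⋆ h)
  - mact (xpi X k) (lam m) + mact (xpi X k) (w (muE X m) h) = 0.
Proof.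
have := Hz gone gone k m h gone; rewrite /d2; simp1.
rewrite (coc_nf2 (actE X k m)) (coc_nf2 m) mactB => H; zeqtac; zl1 H.
Qed.
End CocL.

Section CocOf.
Variables (Pi0 : Grp) (Pi1 : Module Pi0) (X : CMExt Pi1) (M : Module Pi0)
  (lamf : ME X -> M) (wf : GE X -> GE X -> M).
Hypothesis HW : forall k h g,
  wf k h - wf k (h ⋆ g) + wf (k ⋆ h) g - mact (xpi X k) (wf h g) = 0.
Hypothesis HF : forall p n, lamf (p ⋆ n) = lamf p + lamf n - wf (muE X p) (muE X n).
Hypothesis HA : forall k m h,
  wf k (muE X m ⋆ h) - wf k h + lamf (actE X k m) - wf (muE X (actE X k m)) (k ⋆ h)
  - mact (xpi X k) (lamf m) + mact (xpi X k) (wf (muE X m) h) = 0.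

Definition zof : C2 X M := fun m h g => lamf m - wf (muE X m) h + wf h g.
Lemma zof_cocycle : cocycle2 zof.
Proof.
move=> p n k m h g; rewrite /d2 /zof.
rewrite !cmmuM !HF.
have Hv : muE X (actE X k m) ⋆ (k ⋆ h) = k ⋆ (muE X m ⋆ h).
  by rewrite mu_act -!gmulA gmulKl.
have W1 := HW (muE X p) (muE X n) k.
have W2 := HW (muE X n) k (muE X m ⋆ h).
have W3 := HW (muE X n) (muE X (actE X k m)) (k ⋆ h).
have W4 := HW k h g.
have A := HA k m h.
rewrite Hv !mact_mu in W3; rewrite !mact_mu in W1 W2.
rewrite !mactD !mactN.
zl5 W1 W2 W3 W4 A.
Qed.
End CocOf.

Lemma zhyp (V : zmodType) (a b : V) : a = b -> a - b = 0.
Proof. by move=> ->; rewrite subrr. Qed.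
Ltac zk1 H := first [ apply: (zuse (zhyp H)); zsolve0 | apply: (zuseN (zhyp H)); zsolve0 ].
Ltac zk2 H1 H2 := first [ apply: (zuse (zhyp H1)); zk1 H2 | apply: (zuseN (zhyp H1)); zk1 H2 ].
Ltac zk3 H1 H2 H3 := first [ apply: (zuse (zhyp H1)); zk2 H2 H3 | apply: (zuseN (zhyp H1)); zk2 H2 H3 ].
Ltac zk4 H1 H2 H3 H4 := first [ apply: (zuse (zhyp H1)); zk3 H2 H3 H4 | apply: (zuseN (zhyp H1)); zk3 H2 H3 H4 ].
Ltac zk5 H1 H2 H3 H4 H5 := first [ apply: (zuse (zhyp H1)); zk4 H2 H3 H4 H5 | apply: (zuseN (zhyp H1)); zk4 H2 H3 H4 H5 ].
Ltac zk6 H1 H2 H3 H4 H5 H6 := first [ apply: (zuse (zhyp H1)); zk5 H2 H3 H4 H5 H6 | apply: (zuseN (zhyp H1)); zk5 H2 H3 H4 H5 H6 ].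
Ltac zk7 H1 H2 H3 H4 H5 H6 H7 := first [ apply: (zuse (zhyp H1)); zk6 H2 H3 H4 H5 H6 H7 | apply: (zuseN (zhyp H1)); zk6 H2 H3 H4 H5 H6 H7 ].

Lemma zcancel (V : zmodType) (a d : V) : a - d = a -> d = 0.
Proof. by move=> H; rewrite -[d]opprK -[- d](addKr a) H addNr oppr0. Qed.
Section StdL.
Variables (Pi0 : Grp) (Pi1 : Module Pi0) (X : CMExt Pi1) (M : Module Pi0)
  (s1 : GE X -> ME X) (s0 : Pi0 -> GE X) (Hs : section_system s1 s0)
  (z : C2 X M) (Hz : cocycle2 z) (Hp : pointed2 z).
Local Notation w h g := (z gone h g).
Local Notation lam m := (z m gone gone).
Local Notation sig := (sigma_std s1 s0 z).
Lemma sigma0_std : (forall g, sig g = 0) -> is_std s1 s0 z.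
Proof. by move=> H m h g; rewrite /zstd /d1 !H mact0 subrr addr0 subr0. Qed.
Lemma std_sigma0 : is_std s1 s0 z -> forall g, sig g = 0.
Proof.
move=> Hstd.
have Hd : forall m h g, d1 sig m h g = 0.
  by move=> m h g; apply: (@zcancel _ (z m h g)); exact: Hstd.
have S1 : sig gone = 0.
  by have := Hd gone gone gone; rewrite /d1; simp1; rewrite subrr add0r.
have Smu : forall a h, sig (muE X a ⋆ h) = sig h.
  by move=> a h; have := Hd a h gone; rewrite /d1 gmul1 S1 mact0 addr0 => /eqP; rewrite subr_eq0 => /eqP.
have Ss0 : forall x, sig (s0 x) = 0.
  move=> x; rewrite /sigma_std (pi_s0 Hs) gmulV (s1_1 Hs); exact: coc_w2.
move=> g; rewrite (sec_dec Hs g) Smu; exact: Ss0.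
Qed.
Lemma std_E6 : is_std s1 s0 z ->
  forall h, lam (secA s1 s0 h) - w (muE X (secA s1 s0 h)) (s0 (xpi X h)) = 0.
Proof. by move=> H h; rewrite -coc_nf2 //; exact: (std_sigma0 H h). Qed.
Lemma nf_unique : is_std s1 s0 z ->
  (forall k, z (xiota X k) gone gone = 0) ->
  (forall x y, z gone (s0 x) (s0 y) = 0) ->
  forall m h g, z m h g = 0.
Proof.
move=> Hstd Hk Hc.
have L0 := std_sigma0 Hstd.
have lam_s1 : forall m, lam (s1 (muE X m)) = 0.
  move=> m; have := L0 (muE X m); rewrite /sigma_std xpi_mu (s0_1 Hs) ginv1 gmul1.
  by [].
have lam0 : forall m, lam m = 0.
  move=> m; have [k Hk'] := m_decomp Hs m; rewrite Hk' coc_F1 // mu_iota coc_w2 // lam_s1 Hk.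
  by rewrite !add0r oppr0.
have w_mu_s0 : forall c y, w (muE X c) (s0 y) = 0.
  move=> c y; have := L0 (muE X c ⋆ s0 y).
  rewrite /sigma_std xpiM xpi_mu g1mul (pi_s0 Hs) gmulKr coc_nf2 // (mu_s1 Hs) lam0 sub0r.
  move=> HH; zeqtac; zk1 HH.
have w_mu_mu : forall p n, w (muE X p) (muE X n) = 0.
  move=> p n; have := coc_F1 Hz Hp p n; rewrite !lam0 !add0r.
  move=> HH; zeqtac; zk1 HH.
have w_mu_any : forall a g, w (muE X a) g = 0.
  move=> a g; rewrite (sec_dec Hs g).
  have := coc_W Hz (muE X a) (muE X (secA s1 s0 g)) (s0 (xpi X g)).
  rewrite -cmmuM w_mu_s0 w_mu_mu w_mu_s0 mact0 !subr0 add0r.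
  move=> HH; zeqtac; zk1 HH.
have w_s0_mu : forall x b, w (s0 x) (muE X b) = 0.
  move=> x b; have := coc_A1 Hz Hp (s0 x) b gone.
  rewrite !gmul1 coc_w2 // !lam0 w_mu_any coc_w2 // mact0; move=> HH; zeqtac; zk1 HH.
have w_s0_any : forall x g, w (s0 x) g = 0.
  move=> x g; rewrite (sec_dec Hs g).
  set b := secA s1 s0 g; set y := xpi X g.
  have E1 : s0 x ⋆ muE X b = muE X (actE X (s0 x) b) ⋆ s0 x.
    by rewrite mu_act gmulVKr.
  have := coc_W Hz (s0 x) (muE X b) (s0 y).
  have := coc_W Hz (muE X (actE X (s0 x) b)) (s0 x) (s0 y).
  rewrite -E1 !w_mu_any w_s0_mu Hc !mact0 => H1 H2; zeqtac; zk2 H1 H2.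
have w_any : forall h g, w h g = 0.
  move=> h g; rewrite (sec_dec Hs h).
  have := coc_W Hz (muE X (secA s1 s0 h)) (s0 (xpi X h)) g.
  rewrite !w_mu_any w_s0_any !mact0 => H1; zeqtac; zk1 H1.
move=> m h g; rewrite coc_nf // lam0 !w_any; zsolve.
Qed.
End StdL.

Ltac gnorm := rewrite ?gmulA; do 4 rewrite ?gmulKr ?gmulVKr ?gmulV ?gVmul ?g1mul ?gmul1.
Ltac gnorm2 := rewrite ?ginvM ?ginvK ?ginv1; gnorm.
Section YCons.
Variables (Pi0 : Grp) (Pi1 : Module Pi0) (E Et : CMExt Pi1)
  (phi0 : GE E -> GE Et) (phi1 : ME E -> ME Et) (Hphi : ext_equiv phi0 phi1)
  (M : Module Pi0) (z : C2 E M) (Hz : cocycle2 z) (Hp : pointed2 z).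
Local Notation w h g := (z gone h g).
Local Notation lam m := (z m gone gone).

Lemma phi0M x y : phi0 (x ⋆ y) = phi0 x ⋆ phi0 y. Proof. by case: Hphi. Qed.
Lemma phi1M x y : phi1 (x ⋆ y) = phi1 x ⋆ phi1 y. Proof. by case: Hphi => _ []. Qed.
Lemma phi_mu m : muE Et (phi1 m) = phi0 (muE E m). Proof. by case: Hphi => _ [] _ []. Qed.
Lemma phi_act g m : phi1 (actE E g m) = actE Et (phi0 g) (phi1 m).
Proof. by case: Hphi => _ [] _ [] _ []. Qed.
Lemma phi_iota k : phi1 (xiota E k) = xiota Et k. Proof. by case: Hphi => _ [] _ [] _ [] _ []. Qed.
Lemma phi_pi g : xpi Et (phi0 g) = xpi E g. Proof. by case: Hphi => _ [] _ [] _ [] _ []. Qed.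
Lemma phi0_1 : phi0 gone = gone. Proof. exact: ghom1 phi0M. Qed.
Lemma phi1_1 : phi1 gone = gone. Proof. exact: ghom1 phi1M. Qed.
Lemma phi0V x : phi0 (ginv x) = ginv (phi0 x). Proof. by rewrite (ghomV phi0M). Qed.
Lemma phi1V x : phi1 (ginv x) = ginv (phi1 x). Proof. by rewrite (ghomV phi1M). Qed.
Definition Ycar := (ME Et * M * GE E)%type.
Definition Ymul (p q : Ycar) : Ycar :=
  (p.1.1 ⋆ actE Et (phi0 p.2) q.1.1, p.1.2 + mact (xpi E p.2) q.1.2 + w p.2 q.2, p.2 ⋆ q.2).
Definition Yone : Ycar := (gone, 0, gone).
Definition Yinv (p : Ycar) : Ycar :=
  (actE Et (phi0 (ginv p.2)) (ginv p.1.1),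
   - mact (xpi E (ginv p.2)) (p.1.2 + w p.2 (ginv p.2)), ginv p.2).
Lemma YmulA x y t : Ymul x (Ymul y t) = Ymul (Ymul x y) t.
Proof.
case: x => [[m1 a1] g1]; case: y => [[m2 a2] g2]; case: t => [[m3 a3] g3].
rewrite /Ymul /=; congr (_, _, _).
- by rewrite cmactD phi0M cmactM gmulA.
- have := coc_W Hz g1 g2 g3.
  rewrite !mactD xpiM mactM => H; zeqtac; zk1 H.
- by rewrite gmulA.
Qed.

Lemma Ymul1 x : Ymul x Yone = x.
Proof.
case: x => [[m a] g]; rewrite /Ymul /=.
by rewrite cmact_one gmul1 mact0 addr0 coc_w2 // addr0 gmul1.
Qed.
Lemma Y1mul x : Ymul Yone x = x.
Proof.
case: x => [[m a] g]; rewrite /Ymul /=.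
by rewrite phi0_1 cmact1 g1mul xpi1 mact1 add0r coc_w1 // addr0 g1mul.
Qed.
Lemma YmulV x : Ymul x (Yinv x) = Yone.
Proof.
case: x => [[m a] g]; rewrite /Ymul /Yinv /=; congr (_, _, _).
- by rewrite -cmactM -phi0M gmulV phi0_1 cmact1 gmulV.
- rewrite mactN -mactM -xpiM gmulV xpi1 mact1; zsolve.
- by rewrite gmulV.
Qed.
Lemma YVmul x : Ymul (Yinv x) x = Yone.
Proof.
case: x => [[m a] g]; rewrite /Ymul /Yinv /=; congr (_, _, _).
- by rewrite -cmactD gVmul cmact_one.
- have := coc_W Hz (ginv g) g (ginv g).
  rewrite gmulV gVmul coc_w2 // coc_w1 // mactD => H.
  zeqtac; zk1 H.
- by rewrite gVmul.
Qed.
Definition Y : Grp := {| gcar := Ycar; gmul := Ymul; ginv := Yinv; gone := Yone;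
  gmulA := YmulA; gmul1 := Ymul1; g1mul := Y1mul; gmulV := YmulV; gVmul := YVmul |}.

Lemma YmulE (x y : Y) : x ⋆ y = Ymul x y. Proof. by []. Qed.
Lemma zp1 : z gone gone gone = 0. Proof. exact: Hp. Qed.
Ltac ysimp := do 2 rewrite ?phi0_1 ?phi1_1 ?cmact1 ?cmact_one ?gmul1 ?g1mul ?xpi1 ?mact1 ?mact0 ?zp1
  ?(coc_w1 Hz Hp) ?(coc_w2 Hz Hp) ?addr0 ?add0r ?ginv1 ?cmmu1.
Definition yj (a : M) : Y := (gone, a, gone).
Definition ynu (n : ME E) : Y := (ginv (phi1 n), - lam n, muE E n).
Definition yzeta (g : GE E) : Y := (gone, 0, g).
Definition yq (y : Y) : GE Et := muE Et y.1.1 ⋆ phi0 y.2.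
Lemma yj_mul a b : yj a ⋆ yj b = yj (a + b).
Proof.
rewrite YmulE /Ymul /yj /=.
by ysimp.
Qed.
Lemma ynu_mul n n' : ynu n ⋆ ynu n' = ynu (n ⋆ n').
Proof.
rewrite YmulE /Ymul /ynu /=; congr (_, _, _).
- rewrite -phi_mu act_mu phi1M ginvM.
  by gnorm.
- rewrite mact_mu coc_F1 //; zsolve.
- by rewrite cmmuM.
Qed.
Lemma yconj_j (y : Y) b : y ⋆ yj b = yj (mact (xpi E y.2) b) ⋆ y.
Proof.
case: y => [[m a] g]; rewrite !YmulE /Ymul /yj /=; congr (_, _, _).
- by rewrite cmact_one gmul1 phi0_1 cmact1 g1mul.
- by rewrite coc_w2 // coc_w1 // xpi1 mact1 !addr0 addrC.
- by rewrite gmul1 g1mul.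
Qed.
Lemma yconj_nu (y : Y) n : y ⋆ ynu n = ynu (actE E y.2 n) ⋆ y.
Proof.
case: y => [[m a] g]; rewrite !YmulE /Ymul /ynu /=; congr (_, _, _).
- rewrite -phi_mu act_mu phi_act cmact_inv.
  by gnorm.
- have := coc_A1 Hz Hp g n gone.
  rewrite !gmul1 coc_w2 // coc_w2 // mact0 mactN mact_mu => H; zeqtac; zk1 H.
- by rewrite mu_act gmulVKr.
Qed.

Lemma yq_mul (x y : Y) : yq (x ⋆ y) = yq x ⋆ yq y.
Proof.
case: x => [[m a] g]; case: y => [[m' a'] g']; rewrite YmulE /Ymul /yq /=.
by rewrite cmmuM mu_act phi0M; gnorm.
Qed.
Lemma yq_j a : yq (yj a) = gone.
Proof. by rewrite /yq /yj /=; ysimp. Qed.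
Lemma yq_nu n : yq (ynu n) = gone.
Proof. by rewrite /yq /ynu /= cmmuV phi_mu gVmul. Qed.
Lemma iotaNV (X : CMExt Pi1) k : ginv (xiota X (- k)) = xiota X k.
Proof. by symmetry; apply: ginv_uniq; rewrite -xiota_hom addNr xiota0. Qed.
Lemma ker_yq (y : Y) : yq y = gone -> exists b n, y = yj b ⋆ ynu n.
Proof.
case: y => [[m a] g]; rewrite /yq /= => H.
have Hg : xpi E g = gone.
  have := ginv_uniq H => H'.
  by rewrite -phi_pi H' xpiV xpi_mu ginv1.
have [n0 Hn0] := (proj1 (@xexact2 _ _ E g) Hg).
have : muE Et (m ⋆ phi1 n0) = gone by rewrite cmmuM phi_mu Hn0.
move=> /(@xexact1 _ _ Et) [k Hk].
exists (a + lam (n0 ⋆ xiota E (- k))), (n0 ⋆ xiota E (- k)).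
rewrite ?YmulE /Ymul /yj /ynu /=; ysimp; congr (_, _, _).
- by rewrite phi1M phi_iota ginvM iotaNV Hk gmulKr.
- zsolve.
- by rewrite cmmuM mu_iota gmul1.
Qed.
Lemma yjnu_inj b b' n n' : yj b ⋆ ynu n = yj b' ⋆ ynu n' -> b = b'.
Proof.
rewrite ?YmulE /Ymul /yj /ynu /=; ysimp.
case=> H1 H2 H3.
have E1 : phi1 n = phi1 n' by rewrite -(ginvK (phi1 n)) H1 ginvK.
have : muE E (ginv n ⋆ n') = gone by rewrite cmmuM cmmuV H3 gVmul.
move=> /(@xexact1 _ _ E) [k Hk].
have : xiota Et k = xiota Et 0.
  by rewrite -phi_iota Hk phi1M phi1V E1 gVmul xiota0.
move=> /(@xiota_inj _ _ Et) Hk0.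
have En : n' = n.
  by rewrite -(gmulVKl n n') -Hk Hk0 xiota0 gmul1.
move: H2; rewrite En => H2.
by apply: (addIr (- lam n)).
Qed.

Definition tau (y : Y) : M := epsilon (inhabits 0) (fun b => exists n, y = yj b ⋆ ynu n).
Lemma tau_spec (y : Y) : yq y = gone -> exists n, y = yj (tau y) ⋆ ynu n.
Proof. by move=> /ker_yq H; apply: (epsilon_spec (inhabits 0) (fun b => exists n, y = yj b ⋆ ynu n)). Qed.
Lemma tau_eq b n : tau (yj b ⋆ ynu n) = b.
Proof.
have : yq (yj b ⋆ ynu n) = gone by rewrite yq_mul yq_j yq_nu gmul1.
move=> /tau_spec [n' Hn']; symmetry; exact: yjnu_inj Hn'.
Qed.
Lemma ynu_j n b : ynu n ⋆ yj b = yj b ⋆ ynu n.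
Proof. by rewrite yconj_j /= mact_mu. Qed.
Lemma tau_mul (x y : Y) : yq x = gone -> yq y = gone -> tau (x ⋆ y) = tau x + tau y.
Proof.
move=> /tau_spec [n Hn] /tau_spec [n' Hn'].
rewrite {1}Hn {1}Hn' -gmulA (gmulA (ynu n)) ynu_j -!gmulA gmulA yj_mul ynu_mul tau_eq.
by [].
Qed.
Lemma tau_conj (y x : Y) : yq x = gone -> tau (y ⋆ x ⋆ ginv y) = mact (xpi E y.2) (tau x).
Proof.
move=> /tau_spec [n Hn].
rewrite {1}Hn gmulA yconj_j -(gmulA _ y) yconj_nu -!gmulA gmulV gmul1 tau_eq.
by [].
Qed.
Lemma tau_1 : tau gone = 0.
Proof.
have -> : (gone : Y) = yj 0 ⋆ ynu gone.
  rewrite YmulE /Ymul /yj /ynu /=; ysimp; rewrite ?oppr0 ?addr0; by [].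
exact: tau_eq.
Qed.
Lemma yq_inv (y : Y) : yq (ginv y) = ginv (yq y).
Proof. exact: (ghomV yq_mul). Qed.
Lemma yq_1 : yq gone = gone.
Proof. exact: (ghom1 yq_mul). Qed.

Variables (s1 : GE E -> ME E) (s0 : Pi0 -> GE E) (Hs : section_system s1 s0)
  (st1 : GE Et -> ME Et) (st0 : Pi0 -> GE Et) (Hst : section_system st1 st0)
  (Hst0 : forall x, st0 x = phi0 (s0 x))
  (Hst1 : forall g, (exists m, muE E m = g) -> phi1 (s1 g) = st1 (phi0 g))
  (Hstd : is_std s1 s0 z).
Definition ysig (g : GE Et) : Y := (secA st1 st0 g, 0, s0 (xpi Et g)).
Definition yLam (m : ME Et) : Y := (m, 0, gone).
Definition wt (h g : GE Et) : M := tau (ysig h ⋆ ysig g ⋆ ginv (ysig (h ⋆ g))).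
Definition lamt (m : ME Et) : M := - tau (yLam m ⋆ ginv (ysig (muE Et m))).
Lemma yq_sig g : yq (ysig g) = g.
Proof. by rewrite /yq /ysig /= -Hst0 -sec_dec. Qed.
Lemma yq_Lam m : yq (yLam m) = muE Et m.
Proof. by rewrite /yq /yLam /= phi0_1 gmul1. Qed.
Lemma ysig2 g : xpi E (ysig g).2 = xpi Et g.
Proof. by rewrite /ysig /= (pi_s0 Hs). Qed.
Ltac kq := rewrite ?yq_mul ?yq_inv ?yq_sig ?yq_Lam; gnorm2.
Lemma Wt k h g : wt k h - wt k (h ⋆ g) + wt (k ⋆ h) g - mact (xpi Et k) (wt h g) = 0.
Proof.
rewrite /wt.
have Eq : ysig k ⋆ (ysig h ⋆ ysig g ⋆ ginv (ysig (h ⋆ g))) ⋆ ginv (ysig k) ⋆ (ysig k ⋆ ysig (h ⋆ g) ⋆ ginv (ysig (k ⋆ (h ⋆ g))))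
   = (ysig k ⋆ ysig h ⋆ ginv (ysig (k ⋆ h))) ⋆ (ysig (k ⋆ h) ⋆ ysig g ⋆ ginv (ysig (k ⋆ (h ⋆ g)))).
  by gnorm2.
have k1 : yq (ysig h ⋆ ysig g ⋆ ginv (ysig (h ⋆ g))) = gone by kq.
have k2 : yq (ysig k ⋆ ysig (h ⋆ g) ⋆ ginv (ysig (k ⋆ (h ⋆ g)))) = gone by kq.
have k3 : yq (ysig k ⋆ ysig h ⋆ ginv (ysig (k ⋆ h))) = gone by kq.
have k4 : yq (ysig (k ⋆ h) ⋆ ysig g ⋆ ginv (ysig (k ⋆ (h ⋆ g)))) = gone by kq.
have k5 : yq (ysig k ⋆ (ysig h ⋆ ysig g ⋆ ginv (ysig (h ⋆ g))) ⋆ ginv (ysig k)) = gone.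
  by rewrite yq_mul yq_mul k1 yq_inv gmul1 gmulV.
have := congr1 tau Eq.
rewrite (tau_mul k5 k2) (tau_mul k3 k4) (tau_conj _ k1) ysig2 -(gmulA k h g) => H; zeqtac; zk1 H.
Qed.

Lemma yLam_mul p n : yLam (p ⋆ n) = yLam p ⋆ yLam n.
Proof. by rewrite YmulE /Ymul /yLam /=; ysimp. Qed.
Lemma yLam_act k m : yLam (actE Et k m) = ysig k ⋆ yLam m ⋆ ginv (ysig k).
Proof.
apply: (@gcancel_r _ (ysig k)); rewrite gmulVKr.
rewrite !YmulE /Ymul /yLam /ysig /=; ysimp.
by rewrite {1}(sec_dec Hst k) Hst0 cmactM act_mu gmulVKr.
Qed.
Ltac kq ::= rewrite ?yq_mul ?yq_inv ?yq_sig ?yq_Lam ?mu_act; gnorm2.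
Lemma Ft p n : lamt (p ⋆ n) = lamt p + lamt n - wt (muE Et p) (muE Et n).
Proof.
rewrite /lamt /wt cmmuM yLam_mul.
have Eq : yLam p ⋆ yLam n ⋆ ginv (ysig (muE Et p ⋆ muE Et n)) =
  (yLam p ⋆ ginv (ysig (muE Et p))) ⋆
  (ysig (muE Et p) ⋆ (yLam n ⋆ ginv (ysig (muE Et n))) ⋆ ginv (ysig (muE Et p))) ⋆
  (ysig (muE Et p) ⋆ ysig (muE Et n) ⋆ ginv (ysig (muE Et p ⋆ muE Et n))).
  by gnorm2.
have k1 : yq (yLam p ⋆ ginv (ysig (muE Et p))) = gone by kq.
have k2 : yq (yLam n ⋆ ginv (ysig (muE Et n))) = gone by kq.
have k3 : yq (ysig (muE Et p) ⋆ ysig (muE Et n) ⋆ ginv (ysig (muE Et p ⋆ muE Et n))) = gone by kq.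
have k4 : yq (ysig (muE Et p) ⋆ (yLam n ⋆ ginv (ysig (muE Et n))) ⋆ ginv (ysig (muE Et p))) = gone.
  by kq.
have k5 : yq ((yLam p ⋆ ginv (ysig (muE Et p))) ⋆
  (ysig (muE Et p) ⋆ (yLam n ⋆ ginv (ysig (muE Et n))) ⋆ ginv (ysig (muE Et p)))) = gone.
  by kq.
rewrite Eq (tau_mul k5 k3) (tau_mul k1 k4) (tau_conj _ k2) ysig2 xpi_mu mact1.
zsolve.
Qed.

Lemma At k m h :
  wt k (muE Et m ⋆ h) - wt k h + lamt (actE Et k m) - wt (muE Et (actE Et k m)) (k ⋆ h)
  - mact (xpi Et k) (lamt m) + mact (xpi Et k) (wt (muE Et m) h) = 0.
Proof.
rewrite /lamt /wt.
set u := muE Et m.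
set v := muE Et (actE Et k m).
have Hv : v ⋆ (k ⋆ h) = k ⋆ (u ⋆ h) by rewrite /v /u mu_act; gnorm2.
set S := ysig.
set T := S k ⋆ S u ⋆ ginv (S k) ⋆ ginv (S v).
have Eq1 : S k ⋆ S u ⋆ S h ⋆ ginv (S (k ⋆ (u ⋆ h))) =
  (S k ⋆ (S u ⋆ S h ⋆ ginv (S (u ⋆ h))) ⋆ ginv (S k)) ⋆ (S k ⋆ S (u ⋆ h) ⋆ ginv (S (k ⋆ (u ⋆ h)))).
  by gnorm2.
have Eq2 : S k ⋆ S u ⋆ S h ⋆ ginv (S (k ⋆ (u ⋆ h))) =
  T ⋆ (S v ⋆ (S k ⋆ S h ⋆ ginv (S (k ⋆ h))) ⋆ ginv (S v)) ⋆ (S v ⋆ S (k ⋆ h) ⋆ ginv (S (v ⋆ (k ⋆ h)))).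
  by rewrite Hv /T; gnorm2.
have Eq3 : yLam (actE Et k m) ⋆ ginv (S v) =
  (S k ⋆ (yLam m ⋆ ginv (S u)) ⋆ ginv (S k)) ⋆ T.
  by rewrite /T yLam_act; gnorm2.
have kA : yq (S u ⋆ S h ⋆ ginv (S (u ⋆ h))) = gone by rewrite /S; kq.
have kB : yq (S k ⋆ S (u ⋆ h) ⋆ ginv (S (k ⋆ (u ⋆ h)))) = gone by rewrite /S; kq.
have kC : yq (S k ⋆ S h ⋆ ginv (S (k ⋆ h))) = gone by rewrite /S; kq.
have kD : yq (S v ⋆ S (k ⋆ h) ⋆ ginv (S (v ⋆ (k ⋆ h)))) = gone by rewrite /S; kq.
have kT : yq T = gone by rewrite /T /S /v /u; kq.
have kL : yq (yLam m ⋆ ginv (S u)) = gone by rewrite /S /u; kq.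
have kAc : yq (S k ⋆ (S u ⋆ S h ⋆ ginv (S (u ⋆ h))) ⋆ ginv (S k)) = gone by rewrite /S; kq.
have kCc : yq (S v ⋆ (S k ⋆ S h ⋆ ginv (S (k ⋆ h))) ⋆ ginv (S v)) = gone by rewrite /S; kq.
have kLc : yq (S k ⋆ (yLam m ⋆ ginv (S u)) ⋆ ginv (S k)) = gone by rewrite /S /u; kq.
have kTC : yq (T ⋆ (S v ⋆ (S k ⋆ S h ⋆ ginv (S (k ⋆ h))) ⋆ ginv (S v))) = gone by rewrite yq_mul kT kCc gmul1.
have E1 := congr1 tau Eq1.
have E2 := congr1 tau Eq2.
have E3 := congr1 tau Eq3.
rewrite (tau_mul kAc kB) (tau_conj _ kA) /S ysig2 in E1.
rewrite (tau_mul kTC kD) (tau_mul kT kCc) (tau_conj _ kC) /S ysig2 /v xpi_mu mact1 in E2.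
rewrite (tau_mul kLc kT) (tau_conj _ kL) /S ysig2 in E3.
rewrite /T /S /v /u in E1 E2 E3 *; rewrite !mactN opprK.
zeqtac; zk3 E1 E2 E3.
Qed.

Definition zt : C2 Et M := zof lamt wt.
Lemma zt_cocycle : cocycle2 zt.
Proof. exact: zof_cocycle Wt Ft At. Qed.
Lemma ysig1 : ysig gone = gone.
Proof.
rewrite /ysig /secA xpi1 (s0_1 Hs) (s0_1 Hst) ginv1 gmul1 (s1_1 Hst).
by [].
Qed.
Lemma yLam1 : yLam gone = gone. Proof. by []. Qed.
Lemma wt1 k : wt k gone = 0.
Proof. by rewrite /wt gmul1 ysig1 gmul1 gmulV tau_1. Qed.
Lemma zt_pointed : pointed2 zt.
Proof.
rewrite /pointed2 /zt /zof /lamt cmmu1 ysig1 yLam1 ginv1 gmul1 tau_1 oppr0.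
by rewrite wt1 subrr addr0.
Qed.
Lemma ysig_muA g : ysig (muE Et (secA st1 st0 g)) = yLam (secA st1 st0 g).
Proof.
rewrite /ysig /yLam xpi_mu (s0_1 Hs) {1}/secA xpi_mu (s0_1 Hst) ginv1 gmul1.
rewrite (secA_muA Hst) /secA.
by [].
Qed.
Lemma ysig_st0 x : ysig (st0 x) = (gone, 0, s0 x).
Proof. by rewrite /ysig (secA_s0 Hst) (pi_s0 Hst). Qed.
Lemma zt_std : is_std st1 st0 zt.
Proof.
apply: sigma0_std => g.
rewrite /sigma_std -/(secA st1 st0 g) /zt /zof wt1 addr0.
rewrite /lamt ysig_muA gmulV tau_1 oppr0 sub0r.
rewrite /wt ysig_muA ysig_st0 -(sec_dec Hst g).
have -> : yLam (secA st1 st0 g) ⋆ (gone, 0, s0 (xpi Et g)) = ysig g.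
  rewrite YmulE /Ymul /yLam /ysig /=; ysimp; by [].
by rewrite gmulV tau_1 oppr0.
Qed.

Lemma secA_phi h : secA st1 st0 (phi0 h) = phi1 (secA s1 s0 h).
Proof.
rewrite /secA phi_pi Hst0 -phi0V -phi0M (Hst1 _) //.
apply/(@xexact2 _ _ E).
by rewrite xpiM xpiV (pi_s0 Hs) gmulV.
Qed.
Lemma ysig_phi h : ynu (secA s1 s0 h) ⋆ ysig (phi0 h) = yzeta h.
Proof.
rewrite YmulE /Ymul /ynu /ysig /yzeta /= secA_phi phi_pi mact0 addr0.
congr (_, _, _).
- by rewrite -phi_mu act_mu; gnorm2.
- have := std_E6 Hs Hz Hp Hstd h => H; zeqtac; zk1 H.
- by rewrite -(sec_dec Hs).
Qed.
Lemma ysig_phi' h : ysig (phi0 h) = ginv (ynu (secA s1 s0 h)) ⋆ yzeta h.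
Proof. by rewrite -ysig_phi gmulKl. Qed.
Lemma yzeta_mul h g : yzeta h ⋆ yzeta g = yj (w h g) ⋆ yzeta (h ⋆ g).
Proof. by rewrite !YmulE /Ymul /yzeta /yj /=; ysimp. Qed.
Lemma yq_zeta g : yq (yzeta g) = phi0 g.
Proof. by rewrite /yq /yzeta /= cmmu1 g1mul. Qed.
Lemma tau_nu n : tau (ynu n) = 0.
Proof.
have -> : ynu n = yj 0 ⋆ ynu n.
  by rewrite YmulE /Ymul /yj /ynu /=; ysimp.
exact: tau_eq.
Qed.
Lemma tau_j b : tau (yj b) = b.
Proof.
have -> : yj b = yj b ⋆ ynu gone.
  rewrite YmulE /Ymul /yj /ynu /=; ysimp; rewrite ?oppr0 ?addr0; by [].
exact: tau_eq.
Qed.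
Ltac kq ::= rewrite ?yq_mul ?yq_inv ?yq_sig ?yq_Lam ?yq_zeta ?yq_nu ?yq_j ?mu_act; gnorm2.
Lemma ynu1 : ynu gone = gone.
Proof. rewrite /ynu phi1_1 ginv1 zp1 oppr0 cmmu1; by []. Qed.
Lemma ynuV n : ginv (ynu n) = ynu (ginv n).
Proof. by symmetry; apply: ginv_uniq; rewrite ynu_mul gmulV ynu1. Qed.
Lemma wt_phi h g : wt (phi0 h) (phi0 g) = w h g.
Proof.
rewrite /wt -phi0M !ysig_phi'.
set a := secA s1 s0 h; set b := secA s1 s0 g; set c := secA s1 s0 (h ⋆ g).
have Eq : ginv (ynu a) ⋆ yzeta h ⋆ (ginv (ynu b) ⋆ yzeta g) ⋆ ginv (ginv (ynu c) ⋆ yzeta (h ⋆ g))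
  = ginv (ynu a) ⋆ (yzeta h ⋆ ginv (ynu b) ⋆ ginv (yzeta h)) ⋆ (yzeta h ⋆ yzeta g ⋆ ginv (yzeta (h ⋆ g))) ⋆ ynu c.
  by gnorm2.
have E3 : yzeta h ⋆ yzeta g ⋆ ginv (yzeta (h ⋆ g)) = yj (w h g).
  by rewrite yzeta_mul gmulKr.
have k1 : yq (ginv (ynu a)) = gone by kq.
have k2 : yq (ginv (ynu b)) = gone by kq.
have k3 : yq (yzeta h ⋆ ginv (ynu b) ⋆ ginv (yzeta h)) = gone by kq.
have k4 : yq (yj (w h g)) = gone by kq.
have k5 : yq (ynu c) = gone by kq.
rewrite Eq E3 (tau_mul _ k5); last by kq.
rewrite (tau_mul _ k4); last by kq.
rewrite (tau_mul k1 k3) (tau_conj _ k2).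
by rewrite !ynuV !tau_nu tau_j mact0 !add0r addr0.
Qed.
Lemma lamt_phi m : lamt (phi1 m) = lam m.
Proof.
have E0 : ynu m ⋆ yLam (phi1 m) = yj (- lam m) ⋆ yzeta (muE E m).
  rewrite !YmulE /Ymul /ynu /yLam /yj /yzeta /=; ysimp.
  by rewrite -phi_mu act_mu; gnorm2.
have E1 : yLam (phi1 m) = ginv (ynu m) ⋆ (yj (- lam m) ⋆ yzeta (muE E m)).
  by rewrite -E0 gmulKl.
rewrite /lamt phi_mu ysig_phi' E1.
set a := secA s1 s0 (muE E m).
have Eq : ginv (ynu m) ⋆ (yj (- lam m) ⋆ yzeta (muE E m)) ⋆ ginv (ginv (ynu a) ⋆ yzeta (muE E m))
  = ginv (ynu m) ⋆ yj (- lam m) ⋆ ynu a by gnorm2.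
have k1 : yq (ginv (ynu m)) = gone by kq.
have k2 : yq (yj (- lam m)) = gone by kq.
have k3 : yq (ynu a) = gone by kq.
rewrite Eq (tau_mul _ k3); last by kq.
rewrite (tau_mul k1 k2) !ynuV !tau_nu tau_j add0r addr0.
by rewrite opprK.
Qed.
Lemma zt_pull m h g : zt (phi1 m) (phi0 h) (phi0 g) = z m h g.
Proof.
by rewrite /zt /zof lamt_phi phi_mu !wt_phi (coc_nf Hz Hp m h g).
Qed.

Lemma zt_Z2st : Z2st st1 st0 zt.
Proof. by split; [exact: zt_cocycle | exact: zt_pointed | exact: zt_std]. Qed.
End YCons.

Lemma d1_cocycle (Pi0 : Grp) (Pi1 : Module Pi0) (X : CMExt Pi1) (M : Module Pi0) (c : C1 X M) :
  cocycle2 (d1 c).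
Proof.
move=> p n k m h g; rewrite /d2 /d1.
rewrite !cmmuM mu_act !xpiM !xpi_mu !g1mul !mactM !mactD ?mactN; gnorm; zsolve.
Qed.
Lemma cob_cocycle (Pi0 : Grp) (Pi1 : Module Pi0) (X : CMExt Pi1) (M : Module Pi0) (b : C2 X M) :
  coboundary2 b -> cocycle2 b.
Proof.
case=> c Hc p n k m h g; rewrite /d2 !Hc; exact: d1_cocycle.
Qed.
Lemma sub2_cocycle (Pi0 : Grp) (Pi1 : Module Pi0) (X : CMExt Pi1) (M : Module Pi0) (a b : C2 X M) :
  cocycle2 a -> cocycle2 b -> cocycle2 (sub2 a b).
Proof.
move=> Ha Hb p n k m h g; have := Ha p n k m h g; have := Hb p n k m h g.
rewrite /d2 /sub2 mactB => H1 H2; zeqtac; zk2 H1 H2.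
Qed.
Lemma sub2_Z2st (Pi0 : Grp) (Pi1 : Module Pi0) (X : CMExt Pi1) (M : Module Pi0)
  (s1 : GE X -> ME X) (s0 : Pi0 -> GE X) (Hs : section_system s1 s0) (a b : C2 X M) :
  Z2st s1 s0 a -> Z2st s1 s0 b -> Z2st s1 s0 (sub2 a b).
Proof.
case=> Ha Pa Sa [Hb Pb Sb]; split.
- exact: sub2_cocycle.
- by rewrite /pointed2 /sub2 Pa Pb subrr.
- apply: sigma0_std => g.
  have := std_sigma0 Hs Ha Pa Sa g; have := std_sigma0 Hs Hb Pb Sb g.
  rewrite /sigma_std /sub2 => -> ->; by rewrite subrr.
Qed.

Lemma B_sub_Z (Pi0 : Grp) (Pi1 : Module Pi0) (X : CMExt Pi1) (M : Module Pi0)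
  (s1 : GE X -> ME X) (s0 : Pi0 -> GE X) (b : C2 X M) :
  B2st s1 s0 b -> Z2st s1 s0 b.
Proof. by case=> Hb Hp Hs; split => //; exact: cob_cocycle. Qed.
Section MainL.
Variables (Pi0 : Grp) (Pi1 : Module Pi0) (E Et : CMExt Pi1)
    (phi0 : GE E -> GE Et) (phi1 : ME E -> ME Et)
    (s1 : GE E -> ME E) (s0 : Pi0 -> GE E)
    (st1 : GE Et -> ME Et) (st0 : Pi0 -> GE Et)
    (M : Module Pi0).
Hypotheses (Hphi : ext_equiv phi0 phi1) (Hs : section_system s1 s0)
  (Hst : section_system st1 st0) (Hst0 : forall x, st0 x = phi0 (s0 x))
  (Hst1 : forall g, (exists m, muE E m = g) -> phi1 (s1 g) = st1 (phi0 g)).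
Local Notation Phi := (pullback (M := M) phi0 phi1).
Lemma pull_cocycle zt : cocycle2 zt -> cocycle2 (Phi zt).
Proof.
move=> H p n k m h g; have := H (phi1 p) (phi1 n) (phi0 k) (phi1 m) (phi0 h) (phi0 g).
rewrite /d2 /pullback !(phi_mu Hphi) -!(phi0M Hphi) -(phi_act Hphi) -!(phi1M Hphi) (phi_pi Hphi).
by [].
Qed.
Lemma pull_pointed zt : pointed2 zt -> pointed2 (Phi zt).
Proof. by rewrite /pointed2 /pullback (phi0_1 Hphi) (phi1_1 Hphi). Qed.
Lemma pull_std zt : Z2st st1 st0 zt -> is_std s1 s0 (Phi zt).
Proof.
case=> Hc Hp Hsd; apply: sigma0_std => g.
have := std_sigma0 Hst Hc Hp Hsd (phi0 g).
change (zt (secA st1 st0 (phi0 g)) (st0 (xpi Et (phi0 g))) gone = 0 ->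
  zt (phi1 (secA s1 s0 g)) (phi0 (s0 (xpi E g))) (phi0 gone) = 0).
by rewrite (secA_phi Hphi Hs Hst0 Hst1) (phi_pi Hphi) Hst0 (phi0_1 Hphi).
Qed.
Lemma pull_Z2st zt : Z2st st1 st0 zt -> Z2st s1 s0 (Phi zt).
Proof.
move=> HZ; have HZ' := HZ; case: HZ' => Hc Hp Hsd; split.
- exact: pull_cocycle.
- exact: pull_pointed.
- exact: pull_std.
Qed.
Lemma Z_inj zt1 zt2 : Z2st st1 st0 zt1 -> Z2st st1 st0 zt2 ->
  (forall m h g, Phi zt1 m h g = Phi zt2 m h g) -> forall m h g, zt1 m h g = zt2 m h g.
Proof.
move=> H1 H2 Heq m h g.
have [Hc Hp Hsd] := sub2_Z2st Hst H1 H2.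
have Hk : forall k, sub2 zt1 zt2 (xiota Et k) gone gone = 0.
  move=> k; rewrite /sub2 -(phi_iota Hphi k) -(phi0_1 Hphi).
  by have := Heq (xiota E k) gone gone; rewrite /pullback => ->; rewrite subrr.
have Hc' : forall x y, sub2 zt1 zt2 gone (st0 x) (st0 y) = 0.
  move=> x y; rewrite /sub2 !Hst0 -(phi1_1 Hphi).
  by have := Heq gone (s0 x) (s0 y); rewrite /pullback => ->; rewrite subrr.
have := nf_unique Hst Hc Hp Hsd Hk Hc' m h g.
rewrite /sub2 => H; exact: zeq.
Qed.
Lemma Z_surj z : Z2st s1 s0 z ->
  exists zt, Z2st st1 st0 zt /\ forall m h g, Phi zt m h g = z m h g.
Proof.
case=> Hc Hp Hsd; exists (zt Hphi Hc Hp s0 st1 st0); split.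
- exact: (zt_Z2st Hphi Hc Hp Hs Hst Hst0).
- exact: (zt_pull Hphi Hc Hp Hs Hst0 Hst1 Hsd).
Qed.

Lemma pull_B2st bt : B2st st1 st0 bt -> B2st s1 s0 (Phi bt).
Proof.
move=> HB; have [Hcb Hp Hsd] := HB; split.
- case: Hcb => c Hc; exists (fun g => c (phi0 g)) => m h g.
  by rewrite /pullback Hc /d1 (phi_mu Hphi) -!(phi0M Hphi) (phi_pi Hphi).
- exact: pull_pointed.
- exact: pull_std (B_sub_Z HB).
Qed.
Lemma B_surj b : B2st s1 s0 b ->
  exists bt, B2st st1 st0 bt /\ forall m h g, Phi bt m h g = b m h g.
Proof.
move=> HB; have [[c Hc] Hp Hsd] := HB.
have Hcb : cocycle2 b by case: (B_sub_Z HB).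
have c1 : c gone = 0.
  by move: Hp; rewrite /pointed2 Hc /d1 cmmu1 !g1mul xpi1 mact1 subrr add0r.
have cs : forall g, c g = c (s0 (xpi E g)).
  move=> g; have := std_sigma0 Hs Hcb Hp Hsd g.
  rewrite /sigma_std Hc /d1 -/(secA s1 s0 g) (secA_muA Hs) gmulVKr gmul1 c1 mact0 addr0.
  move=> H; exact: zeq.
exists (d1 (fun g => c (s0 (xpi Et g)))); split.
- split.
  + by exists (fun g => c (s0 (xpi Et g))).
  + by rewrite /pointed2 /d1 cmmu1 !g1mul xpi1 mact1 (s0_1 Hs) c1 subrr add0r.
  + apply: sigma0_std => g.
    rewrite /sigma_std /d1 xpiM xpi_mu g1mul gmul1 !(pi_s0 Hst) xpi1 (s0_1 Hs) c1 mact0.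
    by rewrite subrr addr0.
- move=> m h g; rewrite /pullback /d1 Hc /d1 (phi_mu Hphi) -!(phi0M Hphi) !(phi_pi Hphi).
  rewrite (cs (muE E m ⋆ h)) (cs (h ⋆ g)) (cs g) !xpiM xpi_mu g1mul.
  by [].
Qed.
Lemma H_part zt1 zt2 : Z2st st1 st0 zt1 -> Z2st st1 st0 zt2 ->
  (B2st st1 st0 (sub2 zt1 zt2) <-> B2st s1 s0 (sub2 (Phi zt1) (Phi zt2))).
Proof.
move=> H1 H2; split.
- move/pull_B2st; by [].
- move=> HB; have [bt [Hbt Ebt]] := B_surj HB.
  have HZd := sub2_Z2st Hst H1 H2.
  have HZb := B_sub_Z Hbt.
  have Eq := Z_inj HZb HZd Ebt.
  have -> : sub2 zt1 zt2 = bt.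
    apply: functional_extensionality => m; apply: functional_extensionality => h.
    apply: functional_extensionality => g; by rewrite Eq.
  exact: Hbt.
Qed.

End MainL.
Theorem proposition4p11 (Pi0 : Grp) (Pi1 : Module Pi0) (E Et : CMExt Pi1)
    (phi0 : GE E -> GE Et) (phi1 : ME E -> ME Et)
    (s1 : GE E -> ME E) (s0 : Pi0 -> GE E)
    (st1 : GE Et -> ME Et) (st0 : Pi0 -> GE Et)
    (M : Module Pi0) :
  ext_equiv phi0 phi1 ->
  section_system s1 s0 ->
  section_system st1 st0 ->
  (forall x, st0 x = phi0 (s0 x)) ->
  (forall g, (exists m, muE E m = g) -> phi1 (s1 g) = st1 (phi0 g)) ->
  let Phi := pullback (M := M) phi0 phi1 in
  (* Phi is additive *)
  (forall zt1 zt2 m h g, Phi (add2 zt1 zt2) m h g = add2 (Phi zt1) (Phi zt2) m h g) /\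
  (* Phi restricts to a bijection Z^2_st(Et,M) -> Z^2_st(E,M) *)
  (forall zt, Z2st st1 st0 zt -> Z2st s1 s0 (Phi zt)) /\
  (forall zt1 zt2, Z2st st1 st0 zt1 -> Z2st st1 st0 zt2 ->
     (forall m h g, Phi zt1 m h g = Phi zt2 m h g) ->
     forall m h g, zt1 m h g = zt2 m h g) /\
  (forall z, Z2st s1 s0 z ->
     exists zt, Z2st st1 st0 zt /\ forall m h g, Phi zt m h g = z m h g) /\
  (* it induces a bijection B^2_st(Et,M) -> B^2_st(E,M) *)
  (forall bt, B2st st1 st0 bt -> B2st s1 s0 (Phi bt)) /\
  (forall bt1 bt2, B2st st1 st0 bt1 -> B2st st1 st0 bt2 ->
     (forall m h g, Phi bt1 m h g = Phi bt2 m h g) ->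
     forall m h g, bt1 m h g = bt2 m h g) /\
  (forall b, B2st s1 s0 b ->
     exists bt, B2st st1 st0 bt /\ forall m h g, Phi bt m h g = b m h g) /\
  (* and an isomorphism H^2_st(Et,M) -> H^2_st(E,M): the induced map on
     classes is well defined and injective (surjectivity follows from the
     surjectivity on Z^2_st above) *)
  (forall zt1 zt2, Z2st st1 st0 zt1 -> Z2st st1 st0 zt2 ->
     (B2st st1 st0 (sub2 zt1 zt2) <-> B2st s1 s0 (sub2 (Phi zt1) (Phi zt2)))).
Proof.
move=> Hphi Hs Hst Hst0 Hst1 Phi.
split; first by [].
split; first by move=> zt; apply: pull_Z2st.
split; first by move=> zt1 zt2; apply: Z_inj.
split; first by move=> z; apply: Z_surj.
split; first by move=> bt; apply: pull_B2st.
split.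
  move=> bt1 bt2 H1 H2; apply: Z_inj; (try exact: (B_sub_Z H1)); (try exact: (B_sub_Z H2)); by [].
split; first by move=> b; apply: B_surj.
by move=> zt1 zt2; apply: H_part.
Qed.
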